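(* Let $f\ge0$ be integrable on $[-\pi,\pi]$ with $\int f>0$ and such that $\lim_{n\to\infty}\sigma_{n+1}^2(f)/\sigma_n^2(f)=1$. Let $p_n$ be the optimal polynomial for $f$ and define $K_n(\lambda)=|p_n(e^{i\lambda})|^2f(\lambda)/\sigma_n^2(f)$. Then $K_n\ge0$, $\int_{-\pi}^{\pi}K_n(\lambda)\,d\lambda=1$, and for every $0<\delta\le\pi$, $$\lim_{n\to\infty}\int_{\delta\le|\lambda|\le\pi}K_n(\lambda)\,d\lambda=0;$$ i.e. $\{K_n\}$ is an approximate identity.
   Context: $\sigma_n^2(f)=\min_{q\in\mathcal{Q}_n(1)}\int_{-\pi}^{\pi}|q(e^{i\lambda})|^2f(\lambda)\,d\lambda$, where $\mathcal{Q}_n(1)$ is the set of complex polynomials of degree at most $n$ with $q(1)=1$; the optimal polynomial $p_n\in\mathcal{Q}_n(1)$ is the unique minimizer. *)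

(* Defs.v *)
From HB Require Import structures.
From mathcomp Require Import all_boot all_order all_algebra.
From mathcomp Require Import all_classical all_reals all_analysis.
From mathcomp Require Import complex.

Set Implicit Arguments.
Unset Strict Implicit.
Unset Printing Implicit Defensive.

Import Order.TTheory GRing.Theory Num.Theory.
Local Open Scope ring_scope.
Local Open Scope classical_set_scope.

Definition expi (R : realType) (x : R) : R[i] := Complex (cos x) (sin x).

Definition sqmod (R : realType) (z : R[i]) : R :=
  (complex.Re z) ^+ 2 + (complex.Im z) ^+ 2.

Definition Qn1 (R : realType) (n : nat) : set {poly R[i]} :=
  [set q : {poly R[i]} | (size q <= n.+1)%N /\ q.[1] = 1].

Definition qform (R : realType) (f : R -> R) (q : {poly R[i]}) : R :=
  Rintegral (@lebesgue_measure R) `[(- pi)%R, pi]%classic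
    (fun x => sqmod q.[expi x] * f x).

(* sigma_n^2(f) = min_{q in Q_n(1)} qform f q (written as an infimum;
   the minimum is attained) *)
Definition sigma2 (R : realType) (f : R -> R) (n : nat) : R :=
  inf [set qform f q | q in @Qn1 R n].

Definition optimal_poly (R : realType) (f : R -> R) (n : nat)
  (p : {poly R[i]}) : Prop :=
  @Qn1 R n p /\ qform f p = sigma2 f n.

Definition Kn (R : realType) (f : R -> R) (p : nat -> {poly R[i]}) (n : nat)
  (x : R) : R := sqmod (p n).[expi x] * f x / sigma2 f n.

(* Main.v *)
Set Warnings "-all".
Require Import Defs.
From HB Require Import structures.
From mathcomp Require Import all_boot all_order all_algebra.
From mathcomp Require Import all_classical all_reals all_analysis.
From mathcomp Require Import complex.
From mathcomp Require Import ring lra zify measurable_realfun lebesgue_integral.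
Import Order.TTheory GRing.Theory Num.Theory.
Import numFieldNormedType.Exports.
Local Open Scope ring_scope.
Local Open Scope classical_set_scope.

Lemma ReM (R : realType) (a b : R[i]) : complex.Re (a * b) = complex.Re a * complex.Re b - complex.Im a * complex.Im b.
Proof. by case: a => a1 a2; case: b => b1 b2. Qed.
Lemma ImM (R : realType) (a b : R[i]) : complex.Im (a * b) = complex.Re a * complex.Im b + complex.Im a * complex.Re b.
Proof. by case: a => a1 a2; case: b => b1 b2. Qed.
Lemma ReD (R : realType) (a b : R[i]) : complex.Re (a + b) = complex.Re a + complex.Re b.
Proof. by case: a => a1 a2; case: b => b1 b2. Qed.
Lemma ImD (R : realType) (a b : R[i]) : complex.Im (a + b) = complex.Im a + complex.Im b.
Proof. by case: a => a1 a2; case: b => b1 b2. Qed.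

Lemma sqmodM (R : realType) (a b : R[i]) : sqmod (a * b) = sqmod a * sqmod b.
Proof. rewrite /sqmod ReM ImM; ring. Qed.
Lemma sqmod_ge0 (R : realType) (a : R[i]) : 0 <= sqmod a.
Proof. by rewrite /sqmod addr_ge0 // sqr_ge0. Qed.

Lemma meas_expi (R : realType) (q : {poly R[i]}) :
  measurable_fun setT (fun x : R => complex.Re q.[expi x]) /\
  measurable_fun setT (fun x : R => complex.Im q.[expi x]).
Proof.
have mc : measurable_fun setT (@cos R) by exact: measurable_realfun.continuous_measurable_fun (@continuous_cos R).
have ms : measurable_fun setT (@sin R) by exact: measurable_realfun.continuous_measurable_fun (@continuous_sin R).
elim/poly_ind: q => [|q c [h1 h2]].
  split.
    have -> : (fun x : R => complex.Re (0 : {poly R[i]}).[expi x]) = cst 0.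
      by apply/funext => x; rewrite horner0.
    exact: measurable_cst.
  have -> : (fun x : R => complex.Im (0 : {poly R[i]}).[expi x]) = cst 0.
    by apply/funext => x; rewrite horner0.
  exact: measurable_cst.
have -> : (fun x : R => complex.Re (q * 'X + c%:P).[expi x]) =
  ((fun x => complex.Re q.[expi x]) \* cos \- (fun x => complex.Im q.[expi x]) \* sin) \+ cst (complex.Re c).
  by apply/funext => x; rewrite hornerMXaddC ReD ReM.
have -> : (fun x : R => complex.Im (q * 'X + c%:P).[expi x]) =
  ((fun x => complex.Re q.[expi x]) \* sin \+ (fun x => complex.Im q.[expi x]) \* cos) \+ cst (complex.Im c).
  by apply/funext => x; rewrite hornerMXaddC ImD ImM.
split; apply: measurable_realfun.measurable_funD; (try exact: measurable_cst).
  by apply: measurable_realfun.measurable_funB; apply: measurable_realfun.measurable_funM.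
by apply: measurable_realfun.measurable_funD; apply: measurable_realfun.measurable_funM.
Qed.

Lemma meas_sqmod (R : realType) (q : {poly R[i]}) :
  measurable_fun setT (fun x : R => sqmod q.[expi x]).
Proof.
have [h1 h2] := meas_expi R q.
by apply: measurable_realfun.measurable_funD; apply: measurable_realfun.measurable_funM.
Qed.

Definition half (R : realType) : R[i] := Complex (2^-1) 0.
Definition rpoly (R : realType) : {poly R[i]} := (half R)%:P * ('X + 1%:P).

Lemma rpoly1 (R : realType) : (rpoly R).[1] = 1.
Proof.
rewrite /rpoly hornerM hornerC hornerD hornerX hornerC /half.
apply/eqP; rewrite eq_complex /=. apply/andP; split; apply/eqP.
  by field.
by rewrite add0r mulr0 mul0r addr0.
Qed.

Lemma sqmod_rpoly (R : realType) (x : R) : sqmod (rpoly R).[expi x] = (1 + cos x) / 2.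
Proof.
rewrite /rpoly hornerM hornerC hornerD hornerX hornerC /half /expi /sqmod /=.
have h := cos2Dsin2 x.
apply/eqP; rewrite -subr_eq0; apply/eqP.
transitivity ((cos x ^+ 2 + sin x ^+ 2 - 1) / 4); first by field.
by rewrite h subrr mul0r.
Qed.

Lemma Qn1_1 (R : realType) n : @Qn1 R n 1.
Proof. by split; [rewrite size_poly1 | rewrite hornerC]. Qed.


Lemma qform_ge0 (R : realType) (f : R -> R)
  (f_ge0 : forall x, - pi <= x <= pi -> 0 <= f x) q : 0 <= qform f q.
Proof.
rewrite /qform /Rintegral; apply: fine_ge0; apply: integral_ge0 => x Dx.
rewrite lee_fin mulr_ge0 ?sqmod_ge0 //; apply: f_ge0.
by move: Dx; rewrite /= in_itv.
Qed.

Lemma sigma2_ge0 (R : realType) (f : R -> R)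
  (f_ge0 : forall x, - pi <= x <= pi -> 0 <= f x) n : 0 <= sigma2 f n.
Proof.
apply: lb_le_inf; first by exists (qform f 1), 1; first exact: Qn1_1.
by move=> _ [q _ <-]; exact: qform_ge0.
Qed.

Lemma sigma2_le (R : realType) (f : R -> R)
  (f_ge0 : forall x, - pi <= x <= pi -> 0 <= f x) n q :
  @Qn1 R n q -> sigma2 f n <= qform f q.
Proof.
move=> hq; apply: ge_inf; last by exists q.
by exists 0 => _ [r _ <-]; exact: qform_ge0.
Qed.

Lemma sigma2_S (R : realType) (f : R -> R)
  (f_ge0 : forall x, - pi <= x <= pi -> 0 <= f x) n p :
  optimal_poly f n p -> sigma2 f n.+1 <= sigma2 f n.
Proof.
move=> [[hs h1] <-]; apply: sigma2_le => //; split => //.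
exact: leq_trans hs _.
Qed.

Lemma setA_eq (R : realType) (delta : R) (hd : 0 < delta) :
  [set x : R | (delta <= `|x| <= pi)%R] =
  `[(- pi)%R, (- delta)%R] `|` `[delta, pi].
Proof.
apply/seteqP; split => x /=; rewrite !in_itv /=.
  case: (leP 0 x) => hx.
    by rewrite ger0_norm // => ->; right.
  by rewrite ltr0_norm // => /andP[h1 h2]; left; apply/andP; split; lra.
case=> /andP[h1 h2].
  by rewrite ltr0_norm; [apply/andP; split; lra | lra].
by rewrite ger0_norm; [apply/andP; split; lra | lra].
Qed.

Theorem lemma5p2 (R : realType) (f : R -> R)
  (f_ge0 : forall x, - pi <= x <= pi -> 0 <= f x)
  (f_int : (@lebesgue_measure R).-integrable `[(- pi)%R, pi] (EFin \o f))
  (f_pos : (0 < \int[@lebesgue_measure R]_(x in `[(- pi)%R, pi]) (f x)%:E)%E)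
  (ratio : (fun n => sigma2 f n.+1 / sigma2 f n) @ \oo --> (1 : R)%R)
  (p : nat -> {poly R[i]})
  (p_opt : forall n, optimal_poly f n (p n)) :
  (forall n x, - pi <= x <= pi -> 0 <= Kn f p n x) /\
  (forall n, (\int[@lebesgue_measure R]_(x in `[(- pi)%R, pi]) (Kn f p n x)%:E
               = 1)%E) /\
  (forall delta : R, 0 < delta <= pi ->
     (fun n => (\int[@lebesgue_measure R]_(x in [set x : R | (delta <= `|x| <= pi)%R])
                  (Kn f p n x)%:E)%E) @ \oo --> 0%E).
Proof.
have mD : measurable (`[(- pi)%R, pi] : set R) by exact: measurable_itv.
have mf : measurable_fun `[(- pi)%R, pi] f.
  by apply/measurable_realfun.measurable_EFinP; exact: measurable_int f_int.
have s_ge0 := sigma2_ge0 R f f_ge0.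
have s_S n : sigma2 f n.+1 <= sigma2 f n := sigma2_S R f f_ge0 n (p n) (p_opt n).
have s_pos n : 0 < sigma2 f n.
  rewrite lt_neqAle s_ge0 andbT; apply/negP => /eqP h0.
  have z k : sigma2 f (k + n) = 0.
    elim: k => [|k ih] //=; apply/eqP; rewrite eq_le s_ge0 andbT -ih.
    exact: s_S.
  move: ratio; rewrite -(cvg_shiftn n).
  have -> : (fun k => sigma2 f (k + n).+1 / sigma2 f (k + n)) = (fun=> 0).
    by apply/funext => k; rewrite z invr0 mulr0.
  move=> r'.
  have := norm_cvg_unique r' (cvg_cst (0:R)).
  by move=> /(_ _ _) /eqP; rewrite oner_eq0.
have inD x : `[(- pi)%R, pi] x -> - pi <= x <= pi by rewrite /= in_itv.
have mh n : measurable_fun `[(- pi)%R, pi]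
    (fun x => (sqmod (p n).[expi x] * f x)%:E).
  apply/measurable_realfun.measurable_EFinP.
  apply: measurable_realfun.measurable_funM => //.
  exact: measurable_funS measurableT (@subsetT _ _) (meas_sqmod R (p n)).
have h0 n x : `[(- pi)%R, pi] x -> (0 <= (sqmod (p n).[expi x] * f x)%:E)%E.
  by move=> /inD Dx; rewrite lee_fin mulr_ge0 ?sqmod_ge0 ?f_ge0.
have I_eq n : (\int[@lebesgue_measure R]_(x in `[(- pi)%R, pi])
    (sqmod (p n).[expi x] * f x)%:E = (sigma2 f n)%:E)%E.
  have e : fine (\int[@lebesgue_measure R]_(x in `[(- pi)%R, pi])
    (sqmod (p n).[expi x] * f x)%:E)%E = sigma2 f n.
    by case: (p_opt n) => _ <-.
  have := s_pos n; move: e.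
  case: (\int[@lebesgue_measure R]_(x in `[(- pi)%R, pi]) _)%E => [r| |] /= <- //;
    by rewrite ltxx.
split.
  by move=> n x Dx; rewrite /Kn divr_ge0 // mulr_ge0 ?sqmod_ge0 ?f_ge0.
split.
  move=> n; rewrite /Kn.
  under eq_integral => x _ do rewrite EFinM.
  rewrite ge0_integralZr //; first last.
  - by rewrite lee_fin invr_ge0.
  - exact: h0.
  - exact: mh.
  by rewrite I_eq -EFinM mulfV // gt_eqF.
move=> delta /andP[d0 dpi].
have mA : measurable [set x : R | (delta <= `|x| <= pi)%R].
  by rewrite setA_eq //; apply: measurableU; exact: measurable_itv.
have AD : [set x : R | (delta <= `|x| <= pi)%R] `<=` `[(- pi)%R, pi].
  by move=> x /= /andP[_ h]; rewrite in_itv /= -ler_norml.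
pose k := (1 - cos delta) / 2.
have k0 : 0 < k.
  rewrite /k divr_gt0 // subr_gt0 -[X in _ < X](cos0 R) ltr_cos //;
    by rewrite in_itv /= ?(ltW d0) ?dpi ?lexx ?pi_ge0.
have hcos x : delta <= `|x| <= pi -> k <= (1 - cos x) / 2.
  move=> /andP[h1 h2].
  have -> : cos x = cos `|x|.
    by case: (leP 0 x) => hx; [rewrite ger0_norm | rewrite ltr0_norm // cosN].
  rewrite /k ler_pM2r // lerD2l lerN2 leNgt ltr_cos -?leNgt //;
    by rewrite in_itv /= ?(ltW d0) ?dpi ?normr_ge0 ?h2.
have mcos : measurable_fun setT (@cos R).
  exact: measurable_realfun.continuous_measurable_fun (@continuous_cos R).
have mcD : measurable_fun `[(- pi)%R, pi] (fun x : R => (1 + cos x) / 2).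
  apply: measurable_funM; last exact: measurable_cst.
  apply: measurable_funD; first exact: measurable_cst.
  exact: measurable_funS measurableT (@subsetT _ _) mcos.
have mcB : measurable_fun `[(- pi)%R, pi] (fun x : R => (1 - cos x) / 2).
  apply: measurable_funM; last exact: measurable_cst.
  apply: measurable_funB; first exact: measurable_cst.
  exact: measurable_funS measurableT (@subsetT _ _) mcos.
have key n : (0 <= \int[@lebesgue_measure R]_(x in [set x : R | (delta <= `|x| <= pi)%R])
                  (Kn f p n x)%:E <= ((1 - sigma2 f n.+1 / sigma2 f n) / k)%:E)%E.
  pose h x := sqmod (p n).[expi x] * f x.
  pose q := p n * rpoly R.
  have hq : @Qn1 R n.+1 q.
    case: (p_opt n) => [[hs h1] _]; split.
      have hr : (size (rpoly R) <= 2)%N.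
        apply: leq_trans (size_polyMleq _ _) _; rewrite size_XaddC.
        rewrite addn2 /=; exact: size_polyC_leq1.
      apply: leq_trans (size_polyMleq _ _) _.
      rewrite -subn1 leq_subLR add1n.
      by apply: leq_trans (leq_add hs hr) _; rewrite addn2.
    by rewrite hornerM h1 rpoly1 mulr1.
  have hg x : sqmod q.[expi x] * f x = h x * ((1 + cos x) / 2).
    by rewrite /q hornerM sqmodM sqmod_rpoly /h mulrAC.
  have hsplit x : h x = h x * ((1 + cos x) / 2) + h x * ((1 - cos x) / 2).
    by field.
  have mhR : measurable_fun `[(- pi)%R, pi] h.
    by apply/measurable_realfun.measurable_EFinP; exact: mh n.
  have mG : measurable_fun `[(- pi)%R, pi] (fun x => (h x * ((1 + cos x) / 2))%:E).
    by apply/measurable_realfun.measurable_EFinP; exact: measurable_funM.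
  have mE : measurable_fun `[(- pi)%R, pi] (fun x => (h x * ((1 - cos x) / 2))%:E).
    by apply/measurable_realfun.measurable_EFinP; exact: measurable_funM.
  have hpos x : `[(- pi)%R, pi] x -> 0 <= h x.
    by move=> /inD Dx; rewrite /h mulr_ge0 ?sqmod_ge0 ?f_ge0.
  have G0 x : `[(- pi)%R, pi] x -> (0 <= (h x * ((1 + cos x) / 2))%:E)%E.
    move=> Dx; have hc := cos_geN1 x.
    by rewrite lee_fin mulr_ge0 ?hpos // divr_ge0 //; lra.
  have E0 x : `[(- pi)%R, pi] x -> (0 <= (h x * ((1 - cos x) / 2))%:E)%E.
    move=> Dx; have hc := cos_le1 x.
    by rewrite lee_fin mulr_ge0 ?hpos // divr_ge0 //; lra.
  have eqI : (sigma2 f n)%:E =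
     (\int[@lebesgue_measure R]_(x in `[(- pi)%R, pi]) (h x * ((1 + cos x) / 2))%:E +
      \int[@lebesgue_measure R]_(x in `[(- pi)%R, pi]) (h x * ((1 - cos x) / 2))%:E)%E.
    have := ge0_integralD (@lebesgue_measure R) mD G0 mG E0 mE; rewrite /= => <-.
    rewrite -I_eq.
    by apply: eq_integral => x _; rewrite -EFinD -hsplit.
  have hGq : sigma2 f n.+1 <= fine (\int[@lebesgue_measure R]_(x in `[(- pi)%R, pi])
       (h x * ((1 + cos x) / 2))%:E)%E.
    have := sigma2_le R f f_ge0 n.+1 q hq; rewrite /qform /Rintegral.
    by under eq_integral => x _ do rewrite hg.
  have Gge0 := integral_ge0 (@lebesgue_measure R) G0.
  have Ege0 := integral_ge0 (@lebesgue_measure R) E0.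
  have mhA : measurable_fun [set x : R | (delta <= `|x| <= pi)%R] h.
    exact: measurable_funS mD AD mhR.
  have hA0 x : [set x : R | (delta <= `|x| <= pi)%R] x -> (0 <= (h x)%:E)%E.
    by move=> Ax; rewrite lee_fin hpos //; apply: AD.
  have kJ : (k%:E * \int[@lebesgue_measure R]_(x in [set x : R | (delta <= `|x| <= pi)%R])
       (h x)%:E <= \int[@lebesgue_measure R]_(x in `[(- pi)%R, pi]) (h x * ((1 - cos x) / 2))%:E)%E.
    have := ge0_integralZl_EFin (@lebesgue_measure R) mA hA0
      (proj2 (measurable_realfun.measurable_EFinP _ h) mhA) (ltW k0).
    rewrite /= => <-.
    apply: (le_trans _ (ge0_subset_integral (@lebesgue_measure R) mA mD mE E0 AD)).
    apply: ge0_le_integral => //.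
    - by move=> x Ax; rewrite -EFinM lee_fin mulr_ge0 ?(ltW k0) ?hpos //; apply: AD.
    - by apply: emeasurable_funM; [exact: measurable_cst | apply/measurable_realfun.measurable_EFinP].
    - exact: measurable_funS mD AD mE.
    move=> x Ax; rewrite -EFinM lee_fin mulrC ler_wpM2l ?hpos ?hcos //.
    exact: AD.
  have KA : (\int[@lebesgue_measure R]_(x in [set x : R | (delta <= `|x| <= pi)%R])
                  (Kn f p n x)%:E = \int[@lebesgue_measure R]_(x in [set x : R | (delta <= `|x| <= pi)%R])
       (h x)%:E * ((sigma2 f n)^-1)%:E)%E.
    rewrite /Kn; under eq_integral => x _ do rewrite EFinM.
    transitivity (\int[@lebesgue_measure R]_(x in [set x : R | (delta <= `|x| <= pi)%R])
       ((h x)%:E * ((sigma2 f n)^-1)%:E))%E.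
      by apply: eq_integral => x _; rewrite -EFinM.
    have := ge0_integralZr (@lebesgue_measure R) mA
      (proj2 (measurable_realfun.measurable_EFinP _ h) mhA) hA0
      (k := ((sigma2 f n)^-1)%:E).
    by rewrite /= lee_fin invr_ge0 s_ge0 => ->.
  rewrite KA.
  have Jge0 := integral_ge0 (@lebesgue_measure R) hA0.
  move: eqI hGq Gge0 Ege0 kJ Jge0.
  move: (\int[@lebesgue_measure R]_(x in `[(- pi)%R, pi]) (h x * ((1 + cos x) / 2))%:E)%E => G.
  move: (\int[@lebesgue_measure R]_(x in `[(- pi)%R, pi]) (h x * ((1 - cos x) / 2))%:E)%E => E.
  move: (\int[@lebesgue_measure R]_(x in [set x : R | (delta <= `|x| <= pi)%R]) (h x)%:E)%E => J.
  case: G => [g| |]; case: E => [e| |]; case: J => [j| |] //=; last first.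
    by move=> _ _ _ _; rewrite gt0_muley ?lte_fin.
  rewrite -EFinD => -[hs] hG _; rewrite -!EFinM !lee_fin => he kj j0.
  have sp := s_pos n.
  apply/andP; split; first by rewrite divr_ge0.
  have -> : (1 - sigma2 f n.+1 / sigma2 f n) / k =
    (sigma2 f n - sigma2 f n.+1) / (sigma2 f n * k).
    by field; rewrite ?gt_eqF.
  rewrite ler_pdivlMr; last exact: mulr_gt0.
  have -> : j / sigma2 f n * (sigma2 f n * k) = k * j.
    by field; rewrite gt_eqF.
  lra.
apply: (@squeeze_cvge _ _ _ _ (fun=> 0%E) _
  (fun n => ((1 - sigma2 f n.+1 / sigma2 f n) / k)%:E)).
- by apply: nearW => n; exact: key n.
- exact: cvg_cst.
apply/fine_cvgP; split; first by apply: nearW.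
have -> : (0 : R) = (1 - 1) / k by rewrite subrr mul0r.
apply: cvgMr_tmp; apply: cvgB => //; exact: cvg_cst.
Qed.
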